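(* Consider the single-authority continuum model described in the context, where each $u_m$ is concave but possibly non-differentiable at finitely many points, and let $u_m^-$ denote the left derivative of $u_m$. Let $\mu^*$ denote the allocation implemented (in a given state $\omega$) by the generalized APM $A^*_m(y_m,s)\equiv h^{-1}\big(h(s)+u_m^-(y_m)\big)$. Then $\mu^*$ is an optimal allocation in state $\omega$.
   Context: An authority allocates a resource of measure $q\in(0,1)$ to agents with types $(s,m)\in[0,1]\times\mathcal M$ ($\mathcal M$ finite). A state $\omega$ is a type distribution with density $f_\omega$. Allocations are measurable $\mu:\Theta\to\{0,1\}$ allocating measure at most $q$. $h:[0,1]\to\mathbb R_+$ continuous strictly increasing, $\bar s_h(\mu,\omega)=\int\mu h\,dF_\omega$, $x_m(\mu,\omega)=\int_0^1\mu(s,m)f_\omega(s,m)ds$. Utility $\xi=g(\bar s_h+\sum_mu_m(x_m))$ with $g$ continuous strictly increasing; $h(0)+u_m^-(q)\ge0$ is not needed here but the authority always prefers to allocate the full resource. An allocation is optimal in $\omega$ if it maximizes $\xi$ over feasible allocations. An APM $A=\{A_m\}$ implements $\mu$ in state $\omega$ if (1) $\mu(\theta)=1$ iff for all $\theta'$ with $\mu(\theta')=0$, $A_{m(\theta)}(x_{m(\theta)}(\mu,\omega),s(\theta))>A_{m(\theta')}(x_{m(\theta')}(\mu,\omega),s(\theta'))$, and (2) $\sum_mx_m(\mu,\omega)=q$. (Since $A^*$ is monotone, it implements an essentially unique allocation.) *)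

(* Defs.v *)
From HB Require Import structures.
From mathcomp Require Import all_boot all_order all_algebra.
From mathcomp Require Import all_classical all_reals all_analysis.
Set Implicit Arguments. Unset Strict Implicit. Unset Printing Implicit Defensive.
Import Order.TTheory GRing.Theory Num.Theory.
Import numFieldNormedType.Exports.
Local Open Scope classical_set_scope.
Local Open Scope ring_scope.

Definition I01 {R : realType} : set R := [set x : R | 0 <= x <= 1].

Definition leftder {R : realType} (u : R -> R) (x : R) : R :=
  lim ((fun y => (u y - u x) / (y - x)) @ at_left x).

(* Concavity of u on the set D (assumed convex when used). *)
Definition concave_on {R : realType} (D : set R) (u : R -> R) : Prop :=
  forall x y t, D x -> D y -> 0 <= t <= 1 ->
    t * u x + (1 - t) * u y <= u (t * x + (1 - t) * y).

(* An allocation mu : M -> R -> bool, mu m s = true iff type (s,m) gets a unit.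
   x_m(mu, omega) = \int_0^1 mu(s,m) f_omega(s,m) ds. *)
Definition xm {R : realType} {M : finType} (f : M -> R -> R)
  (mu : M -> R -> bool) (m : M) : R :=
  Rintegral (@lebesgue_measure R) I01 (fun s => (mu m s)%:R * f m s).

Definition sbar {R : realType} {M : finType} (h : R -> R) (f : M -> R -> R)
  (mu : M -> R -> bool) : R :=
  \sum_(m : M) Rintegral (@lebesgue_measure R) I01
      (fun s => (mu m s)%:R * h s * f m s).

Definition xi {R : realType} {M : finType} (g h : R -> R) (u : M -> R -> R)
  (f : M -> R -> R) (mu : M -> R -> bool) : R :=
  g (sbar h f mu + \sum_(m : M) u m (xm f mu m)).

Definition feasible {R : realType} {M : finType} (q : R) (f : M -> R -> R)
  (mu : M -> R -> bool) : Prop :=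
  (forall m, measurable_fun I01 (fun s => (mu m s)%:R : R)) /\
  \sum_(m : M) xm f mu m <= q.

Definition optimal {R : realType} {M : finType} (q : R) (g h : R -> R)
  (u : M -> R -> R) (f : M -> R -> R) (mu : M -> R -> bool) : Prop :=
  feasible q f mu /\
  forall mu', feasible q f mu' -> xi g h u f mu' <= xi g h u f mu.

Definition implements {R : realType} {M : finType} (q : R)
  (A : M -> R -> R -> R) (f : M -> R -> R) (mu : M -> R -> bool) : Prop :=
  (forall m s, I01 s ->
     (mu m s <->
      (forall m' s', I01 s' -> mu m' s' = false ->
         A m' (xm f mu m') s' < A m (xm f mu m) s))) /\
  \sum_(m : M) xm f mu m = q.

Definition Astar {R : realType} {M : finType} (hinv h : R -> R)
  (u : M -> R -> R) : M -> R -> R -> R :=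
  fun m y s => hinv (h s + leftder (u m) y).

(* Main.v *)
Require Import Defs.
From HB Require Import structures.
From mathcomp Require Import all_boot all_order all_algebra.
From mathcomp Require Import all_classical all_reals all_analysis.
From mathcomp Require Import ring lra.
Import Order.TTheory GRing.Theory Num.Theory.
Import numFieldNormedType.Exports.
Local Open Scope classical_set_scope.
Local Open Scope ring_scope.

Lemma I01E (R : realType) : (I01 : set R) = `[0, 1]%classic.
Proof. by apply/seteqP; split => x; rewrite /I01 /= in_itv. Qed.

Lemma mI01 (R : realType) : measurable (I01 : set R).
Proof. by rewrite I01E; exact: measurable_itv. Qed.

Lemma int_phi (R : realType) (F phi : R -> R) (B : R) :
  (@lebesgue_measure R).-integrable I01 (EFin \o F) ->
  measurable_fun I01 phi -> (forall s, I01 s -> `|phi s| <= B) ->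
  (@lebesgue_measure R).-integrable I01 (EFin \o (fun s => phi s * F s)).
Proof.
move=> Fi mphi bphi.
have bd : [bounded phi x | x in I01].
  exists B; split; first by rewrite num_real.
  move=> M BM x Ix /=; apply: le_trans (bphi x Ix) _; exact: ltW.
have mphi' : measurable_fun (T:=measurableTypeR R) (U:=R) I01 phi := mphi.
have mI' : measurable (I01 : set (measurableTypeR R)) := mI01 R.
have := integrableMr mI' mphi' bd Fi.
apply: eq_integrable; first exact: mI'.
by move=> x _ /=; rewrite EFinM.
Qed.

Section Conc.
Variables (R : realType) (u : R -> R) (lo hi : R).
Hypothesis cu : concave_on [set x | lo < x < hi] u.

Definition slope (a b : R) := (u b - u a) / (b - a).

Lemma slopeC a b : slope a b = slope b a.
Proof. by rewrite /slope -mulrNN -invrN !opprB. Qed.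

Lemma ler_divs (X Y p q : R) : 0 < p -> 0 < q -> X * q <= Y * p -> X / p <= Y / q.
Proof.
move=> p0 q0 H; rewrite ler_pdivrMr// mulrAC ler_pdivlMr//.
Qed.

Lemma cross a b c : lo < a -> a < b -> b < c -> c < hi ->
  (c - b) * u a + (b - a) * u c <= (c - a) * u b.
Proof.
move=> la ab bc ch.
have ca : 0 < c - a by rewrite subr_gt0 (lt_trans ab bc).
set t := (c - b) / (c - a).
have t0 : 0 <= t by apply: divr_ge0; lra.
have t1 : t <= 1 by rewrite ler_pdivrMr // mul1r; lra.
have Ha : lo < a < hi by rewrite la /= (lt_trans ab (lt_trans bc ch)).
have Hc : lo < c < hi by rewrite ch andbT (lt_trans la (lt_trans ab bc)).
have H := cu a c t Ha Hc.
rewrite t0 t1 in H; have {}H := H isT.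
have e0 : t * a + (1 - t) * c = b.
  rewrite /t; field; by rewrite subr_eq0 gt_eqF // (lt_trans ab bc).
rewrite e0 in H.
have := H; rewrite -(ler_pM2r ca) => H2.
have e1 : (t * u a + (1 - t) * u c) * (c - a) = (c - b) * u a + (b - a) * u c.
  rewrite /t; field; by rewrite subr_eq0 gt_eqF // (lt_trans ab bc).
by move: H2; rewrite e1 [u b * _]mulrC.
Qed.

Lemma slope_le12 a b c : lo < a -> a < b -> b < c -> c < hi ->
  slope a c <= slope a b.
Proof.
move=> la ab bc ch; have H := @cross a b c la ab bc ch.
rewrite /slope; apply: ler_divs; nra.
Qed.

Lemma slope_le23 a b c : lo < a -> a < b -> b < c -> c < hi ->
  slope b c <= slope a c.
Proof.
move=> la ab bc ch; have H := @cross a b c la ab bc ch.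
rewrite /slope; apply: ler_divs; nra.
Qed.


Lemma sig_noninc x z w : lo < x -> x < hi -> lo < z -> z < w -> w < hi -> z != x -> w != x ->
  slope x w <= slope x z.
Proof.
move=> lx xh lz zw wh zx wx.
have [wlx|xlw] := ltP w x.
  rewrite (slopeC x w) (slopeC x z); exact: slope_le23 lz zw wlx xh.
have xw : x < w by rewrite lt_neqAle xlw eq_sym wx.
have [zlx|xlz] := ltP z x.
  rewrite (slopeC x z); apply: (@le_trans _ _ (slope z w)).
    by apply: slope_le23 lz zlx xw wh.
  by apply: slope_le12 lz zlx xw wh.
have xz : x < z by rewrite lt_neqAle xlz eq_sym zx.
by apply: slope_le12 lx xz zw wh.
Qed.

Lemma sig_cvg x : lo < x -> x < hi -> cvg (slope x z @[z --> x^'-]).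
Proof.
move=> lx xh.
rewrite -is_cvgNE.
apply: nondecreasing_at_left_is_cvgr.
  near=> y => a b; rewrite !in_itv /= => /andP[ya ax] /andP[yb bx] ab.
  have ly : lo < y by near: y; exact: nbhs_left_gt.
  rewrite lerN2; rewrite le_eqVlt in ab; case/orP: ab => [/eqP -> //|ab].
  apply: sig_noninc; first [lra | (rewrite lt_eqF //; lra) | (rewrite gt_eqF //; lra)].
near=> y; exists (- slope x ((x + hi) / 2)) => _ [z /= zin <-].
have ly : lo < y by near: y; exact: nbhs_left_gt.
move: zin; rewrite in_itv /= => /andP[yz zx].
rewrite lerN2; apply: sig_noninc; first [lra | (rewrite lt_eqF //; lra) | (rewrite gt_eqF //; lra)].
Unshelve. all: by end_near.
Qed.

Lemma leftder_ge x w : lo < x -> x < w -> w < hi -> slope x w <= leftder u x.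
Proof.
move=> lx xw wh; rewrite /leftder; apply: limr_ge.
  have := @sig_cvg x lx (lt_trans xw wh). rewrite /slope. exact.
near=> z.
have lz : lo < z by near: z; exact: nbhs_left_gt.
have zx : z < x by near: z; exact: nbhs_left_lt.
apply: sig_noninc; first [lra | (rewrite lt_eqF //; lra) | (rewrite gt_eqF //; lra)].
Unshelve. all: by end_near.
Qed.

Lemma leftder_le x z : lo < z -> z < x -> x < hi -> leftder u x <= slope x z.
Proof.
move=> lz zx xh; rewrite /leftder; apply: limr_le.
  have := @sig_cvg x (lt_trans lz zx) xh. rewrite /slope. exact.
near=> y.
have zy : z < y by near: y; exact: nbhs_left_gt.
have yx : y < x by near: y; exact: nbhs_left_lt.
apply: sig_noninc; first [lra | (rewrite lt_eqF //; lra) | (rewrite gt_eqF //; lra)].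
Unshelve. all: by end_near.
Qed.

Lemma supergrad x y : lo < x -> x < hi -> lo < y -> y < hi ->
  u y <= u x + leftder u x * (y - x).
Proof.
move=> lx xh ly yh.
have [yx|xy|->] := ltgtP y x; last by rewrite subrr mulr0 addr0.
  have := @leftder_le x y ly yx xh; rewrite /slope => H.
  have yx0 : y - x < 0 by lra.
  have : (u y - u x) / (y - x) * (y - x) = u y - u x.
    by rewrite mulfVK // lt_eqF.
  nra.
have := @leftder_ge x y lx xy yh; rewrite /slope => H.
have xy0 : 0 < y - x by lra.
have : (u y - u x) / (y - x) * (y - x) = u y - u x.
  by rewrite mulfVK // gt_eqF.
nra.
Qed.

End Conc.

Lemma arithL1 (R : realType) (A T' x' ux' ux d lam xs : R) :
  A + (d - lam) * x' = T' -> ux' <= ux + d * (x' - xs) ->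
  A + ux' <= T' + lam * x' + (ux - d * xs).
Proof. move=> e s; rewrite -e; nra. Qed.

Lemma arithL3 (R : realType) (A x ux d lam : R) :
  A + (d - lam) * x + lam * x + (ux - d * x) <= A + ux.
Proof. nra. Qed.

Theorem proposition10 (R : realType) (M : finType) (q : R)
  (h hinv g : R -> R) (u : M -> R -> R) (lo hi : R)
  (f : M -> R -> R) (mustar : M -> R -> bool) :
  0 < q < 1 ->
  (* h : [0,1] -> R_+ continuous, strictly increasing *)
  {within I01, continuous h} ->
  (forall s, I01 s -> 0 <= h s) ->
  {in I01 &, forall s s', s < s' -> h s < h s'} ->
  (* h^{-1}: a strictly increasing function inverting h on [0,1] *)
  (forall a b : R, a < b -> hinv a < hinv b) ->
  (forall s, I01 s -> hinv (h s) = s) ->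
  (* g continuous strictly increasing *)
  continuous g ->
  (forall a b : R, a < b -> g a < g b) ->
  (* u_m concave on an open interval containing [0,1], differentiable
     except at finitely many points *)
  lo < 0 -> 1 < hi ->
  (forall m, concave_on [set x | lo < x < hi] (u m)) ->
  (forall m, finite_set [set x | lo < x < hi /\ ~ derivable (u m) x 1]) ->
  (* state omega: a type distribution with density f *)
  (forall m, measurable_fun I01 (f m)) ->
  (forall m s, 0 <= f m s) ->
  (forall m, (@lebesgue_measure R).-integrable I01 (EFin \o f m)) ->
  \sum_(m : M) Rintegral (@lebesgue_measure R) I01 (f m) = 1 ->
  (* the authority always prefers to allocate the full resource *)
  (forall mu, feasible q f mu -> exists mu', feasible q f mu' /\
      \sum_(m : M) xm f mu' m = q /\ xi g h u f mu <= xi g h u f mu') ->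
  (* mustar is the allocation implemented by the generalized APM A* *)
  (forall m, measurable_fun I01 (fun s => (mustar m s)%:R : R)) ->
  implements q (Astar hinv h u) f mustar ->
  optimal q g h u f mustar.
Proof.
move=> /andP[q0 q1] hc h0 hinc hinvinc hinvK gc ginc lo0 hi1 ucv _ fm f0 fint
  fsum full mstm [impl sumstar].
have mI' : measurable (I01 : set (measurableTypeR R)) := mI01 R.
have mh : measurable_fun I01 h.
  exact: measurable_realfun.subspace_continuous_measurable_fun (mI01 R) hc.
have hle1 : forall s, I01 s -> h s <= h 1.
  move=> s Is; have [s1|s1] := ltP s 1.
    by apply/ltW/hinc => //; rewrite inE // /I01 /= ler01 lexx.
  have -> : s = 1 by move: Is; rewrite /I01 /= => /andP[_ ?]; apply/le_anti/andP.
  by [].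
have gmono : forall a b, a <= b -> g a <= g b.
  by move=> a b; rewrite le_eqVlt => /orP[/eqP -> //|/ginc/ltW].
have xm_ge0 : forall mu m, 0 <= xm f mu m.
  move=> mu m; apply: Rintegral_ge0 => s _; apply: mulr_ge0 => //.
have xm_leq : forall mu m, \sum_(m : M) xm f mu m = q -> xm f mu m <= q.
  move=> mu m sq; rewrite -sq (bigD1 m) //= lerDl.
  by apply: sumr_ge0 => i _.
have iA : forall mu : M -> R -> bool, (forall m, measurable_fun I01 (fun s => (mu m s)%:R : R)) ->
   forall m c, (@lebesgue_measure R).-integrable I01
     (EFin \o (fun s => (mu m s)%:R * (h s + c) * f m s)).
  move=> mu mmu m c.
  apply: (@int_phi R (f m) (fun s => (mu m s)%:R * (h s + c)) (h 1 + `|c|)).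
  - exact: fint.
  - apply: measurable_realfun.measurable_funM; first exact: mmu.
    apply: measurable_realfun.measurable_funD => //; exact: measurable_cst.
  - move=> s Is.
    have I1 : I01 (1 : R) by rewrite /I01 /= ler01 lexx.
    have k0 : 0 <= h 1 + `|c| by apply: addr_ge0 => //; exact: h0.
    have key : `|h s + c| <= h 1 + `|c|.
      apply: (le_trans (ler_normD _ _)); rewrite ger0_norm ?h0 //.
      by rewrite lerD2r hle1.
    by destruct (mu m s); rewrite /= ?mul1r ?mul0r ?normr0.
have iB : forall mu : M -> R -> bool, (forall m, measurable_fun I01 (fun s => (mu m s)%:R : R)) ->
   forall m c, (@lebesgue_measure R).-integrable I01
     (EFin \o (fun s => c * ((mu m s)%:R * f m s))).
  move=> mu mmu m c.
  have := (@int_phi R (f m) (fun s => c * (mu m s)%:R) `|c|).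
  move=> /(_ (fint m)) H.
  have {}H : (@lebesgue_measure R).-integrable I01
     (EFin \o (fun s => c * (mu m s)%:R * f m s)).
    apply: H.
      apply: measurable_realfun.measurable_funM; first exact: measurable_cst.
      exact: mmu.
    move=> s _; by destruct (mu m s); rewrite /= ?mulr1 ?mulr0 ?normr0.
  apply: eq_integrable H => //= s _; by rewrite mulrA.
have iC : forall mu : M -> R -> bool, (forall m, measurable_fun I01 (fun s => (mu m s)%:R : R)) ->
   forall m, (@lebesgue_measure R).-integrable I01
     (EFin \o (fun s => (mu m s)%:R * h s * f m s)).
  move=> mu mmu m.
  have := iA mu mmu m 0; apply: eq_integrable => //= s _; by rewrite addr0.
have iD : forall mu : M -> R -> bool, (forall m, measurable_fun I01 (fun s => (mu m s)%:R : R)) ->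
   forall m, (@lebesgue_measure R).-integrable I01
     (EFin \o (fun s => (mu m s)%:R * f m s)).
  move=> mu mmu m.
  have := iB mu mmu m 1; apply: eq_integrable => //= s _; by rewrite mul1r.
have E : forall mu : M -> R -> bool, (forall m, measurable_fun I01 (fun s => (mu m s)%:R : R)) ->
   forall m c,
   Rintegral (@lebesgue_measure R) I01 (fun s => (mu m s)%:R * h s * f m s)
   + c * xm f mu m =
   Rintegral (@lebesgue_measure R) I01 (fun s => (mu m s)%:R * (h s + c) * f m s).
  move=> mu mmu m c; rewrite /xm.
  rewrite -(RintegralZl c mI' (iD mu mmu m)).
  rewrite -(RintegralD mI' (iC mu mmu m) (iB mu mmu m c)).
  by apply: eq_Rintegral => s _; ring.
pose d := fun m => leftder (u m) (xm f mustar m).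
have sep : forall m s m' s', I01 s -> I01 s' -> mustar m s ->
    mustar m' s' = false -> h s' + d m' <= h s + d m.
  move=> m s m' s' Is Is' ms ms'.
  have H := (impl m s Is).1 ms m' s' Is' ms'.
  rewrite leNgt; apply/negP => H2.
  have := lt_trans H (hinvinc _ _ H2); by rewrite ltxx.
have [m1 [s1 [Is1 ms1]]] : exists m s, I01 s /\ mustar m s.
  apply: contrapT => /forallNP H0.
  have : \sum_(m : M) xm f mustar m = 0.
    apply: big1 => m _; rewrite /xm.
    rewrite (_ : Rintegral _ _ _ = Rintegral (@lebesgue_measure R) I01 (fun=> 0)).
      by rewrite Rintegral_cst // mul0r.
    apply: eq_Rintegral.
    move=> s; rewrite inE => Is.
    have -> : mustar m s = false.
      apply/negbTE/negP => ms; apply: (H0 m); exists s; split => //.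
    by rewrite mul0r.
  rewrite sumstar => qq; lra.
have [m0 [s0 [Is0 ms0]]] : exists m s, I01 s /\ mustar m s = false.
  apply: contrapT => /forallNP H0.
  have : \sum_(m : M) xm f mustar m = 1.
    rewrite -fsum; apply: eq_bigr => m _; rewrite /xm.
    apply: eq_Rintegral => s; rewrite inE => Is.
    have -> : mustar m s = true.
      apply: contrapT => /negP/negbTE ms; apply: (H0 m); exists s; split => //.
    by rewrite mul1r.
  rewrite sumstar => qq; lra.
pose S0 := [set v : R | exists m s, [/\ I01 s, mustar m s = false & v = h s + d m]].
have hs : has_sup S0.
  split; first by exists (h s0 + d m0); exists m0, s0.
  exists (h s1 + d m1) => v [m [s [Is ms ->]]]; exact: sep.
pose lam := sup S0.
have zero_le : forall m s, I01 s -> mustar m s = false -> h s + d m <= lam.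
  move=> m s Is ms; apply: sup_upper_bound => //; by exists m, s.
have one_ge : forall m s, I01 s -> mustar m s -> lam <= h s + d m.
  move=> m s Is ms; apply: ge_sup; first exact: hs.1.
  move=> v [m' [s' [Is' ms' ->]]]; exact: sep.
have dE : forall m, d m = leftder (u m) (xm f mustar m) by [].
clearbody d lam S0.
have feas : feasible q f mustar by split => //; rewrite sumstar.
split => // mu fmu.
have [mu' [[mmu' _] [sum' le']]] := full mu fmu.
apply: le_trans le' _.
rewrite /xi; apply: gmono.
rewrite /sbar -!big_split /=.
have [T TE] : {T : (M -> R -> bool) -> M -> R | forall nu m, T nu m =
   Rintegral (@lebesgue_measure R) I01
   (fun s => (nu m s)%:R * (h s + (d m - lam)) * f m s)}.
  by exists (fun nu m => Rintegral (@lebesgue_measure R) I01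
   (fun s => (nu m s)%:R * (h s + (d m - lam)) * f m s)).
have [W WE] : {W : M -> R | forall m, W m = u m (xm f mustar m) - d m * xm f mustar m}.
  by exists (fun m => u m (xm f mustar m) - d m * xm f mustar m).
have xb : forall nu m, \sum_(m : M) xm f nu m = q -> lo < xm f nu m < hi.
  move=> nu m sq; have := xm_ge0 nu m; have := xm_leq nu m sq; lra.
apply: (@le_trans _ _ (\sum_(m : M) (T mu' m + lam * xm f mu' m + W m))).
  apply: ler_sum => m _.
  have e := E mu' mmu' m (d m - lam).
  have /andP[a1 a2] := xb mu' m sum'.
  have /andP[b1 b2] := xb mustar m sumstar.
  have sg := @supergrad R (u m) lo hi (ucv m) (xm f mustar m) (xm f mu' m) b1 b2 a1 a2.
  rewrite -dE in sg.
  rewrite TE WE; exact: arithL1 e sg.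
apply: (@le_trans _ _ (\sum_(m : M) (T mustar m + lam * xm f mustar m + W m))).
  rewrite !big_split /= -!mulr_sumr sum' sumstar lerD2r lerD2r.
  apply: ler_sum => m _; rewrite !TE; apply: le_Rintegral => //.
  - exact: iA.
  - exact: iA.
  move=> s Is.
  have f0' := f0 m s.
  destruct (mu' m s) eqn:E1; destruct (mustar m s) eqn:E2; rewrite /= ?mul1r ?mul0r //.
    apply: mulr_le0_ge0 => //; rewrite addrA subr_le0; exact: zero_le.
  apply: mulr_ge0 => //; rewrite addrA subr_ge0; exact: one_ge.
apply: ler_sum => m _.
have e := E mustar mstm m (d m - lam).
rewrite TE WE -e; exact: arithL3.
Qed.
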